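(* Let $\ell\ge2$. In $CK(2,\ell)$ there is a directed path from a vertex $u$ to a vertex $v$ if and only if the imprint of $v$ contains the same number of $+$ signs and the same number of $-$ signs as the imprint of $u$.
   Context: $CK(2,\ell)$ has as vertices all sequences $a_1\ldots a_\ell\in\{0,1,2\}^\ell$ with $a_i\neq a_{i+1}$ for $1\le i\le\ell-1$ and $a_1\ne a_\ell$, and an arc from $a_1\ldots a_\ell$ to $b_1\ldots b_\ell$ iff both are vertices and $b_i=a_{i+1}$ for $1\le i\le \ell-1$. For distinct $a,b\in\{0,1,2\}$ define $sgn(0,1)=sgn(1,2)=sgn(2,0)=+$ and $sgn(1,0)=sgn(2,1)=sgn(0,2)=-$. The imprint of $v=v_1\ldots v_\ell$ is $im(v)=(sgn(v_1,v_2),\dots,sgn(v_{\ell-1},v_\ell),sgn(v_\ell,v_1))$. *)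

(* Defs.v *)
From mathcomp Require Import all_boot.
Set Implicit Arguments. Unset Strict Implicit. Unset Printing Implicit Defensive.

(* Symbols {0,1,2} are 'I_3; words a_1...a_l are l.-tuples, a_i = tnth a (i-1). *)

Definition ck_vertex (l : nat) (a : l.-tuple 'I_3) : bool :=
  [forall i : 'I_l, (i.+1 < l) ==> (nth ord0 a i != nth ord0 a i.+1)]
  && (nth ord0 a 0 != nth ord0 a l.-1).

Definition ck_arc (l : nat) : rel (l.-tuple 'I_3) :=
  fun a b => [&& ck_vertex a, ck_vertex b &
     [forall i : 'I_l, (i.+1 < l) ==> (nth ord0 b i == nth ord0 a i.+1)]].

(* sgn(x,y) = + (true) iff y = x+1 mod 3, i.e. (0,1),(1,2),(2,0);
   for distinct x,y the other case is - (false). *)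
Definition sgn (x y : 'I_3) : bool := (val y == (val x).+1 %% 3).

Definition imprint (l : nat) (v : l.-tuple 'I_3) : seq bool :=
  [seq sgn (nth ord0 v i) (nth ord0 v ((i.+1) %% l)) | i <- iota 0 l].

Definition nplus (s : seq bool) : nat := count id s.
Definition nminus (s : seq bool) : nat := count negb s.

(* Main.v *)
Require Import Defs.
From mathcomp Require Import all_boot zify.

Definition step (x : 'I_3) (b : bool) : 'I_3 :=
  Ordinal (ltn_pmod (x + (if b then 1 else 2)) (isT : 0 < 3)).

Lemma step_val x b : val (step x b) = (x + (if b then 1 else 2)) %% 3.
Proof. by []. Qed.

Lemma fin3 (P : 'I_3 -> Prop) :
  P (@Ordinal 3 0 isT) -> P (@Ordinal 3 1 isT) -> P (@Ordinal 3 2 isT) -> forall x, P x.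
Proof.
move=> h0 h1 h2 [[|[|[|n]]] Hn] //.
- by rewrite (_ : Ordinal Hn = @Ordinal 3 0 isT) //; apply: val_inj.
- by rewrite (_ : Ordinal Hn = @Ordinal 3 1 isT) //; apply: val_inj.
- by rewrite (_ : Ordinal Hn = @Ordinal 3 2 isT) //; apply: val_inj.
Qed.

Ltac f3 := apply: fin3.

Lemma sgn_step x b : sgn x (step x b) = b.
Proof. by move: x; case: b; f3. Qed.

Lemma step_sgn x y : x != y -> step x (sgn x y) = y.
Proof. by move: y; f3; move: x; f3 => //= _; apply: val_inj. Qed.

Lemma stepK2 y a b : a != b -> step (step y a) b = y.
Proof. by case: a; case: b => // _; move: y; f3; apply: val_inj. Qed.

Lemma step3 x y b : [|| y == x, y == step x b | y == step (step x b) b].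
Proof. by move: y; f3; move: x; f3; case: b. Qed.

Lemma sgn4 x y z w : x != y -> y != z -> x != w -> w != z ->
  sgn y z + sgn x y = sgn x w + sgn w z.
Proof. by move: x; f3; move: y; f3; move: z; f3; move: w; f3. Qed.

Definition neq : rel 'I_3 := fun a b => a != b.
Definition cyc (s : seq 'I_3) := cycle neq s.
Definition csg (s : seq 'I_3) : seq bool :=
  if s is x :: r then pairmap sgn x (rcons r x) else [::].
Definition V x ss := belast x (scanl step x ss).
Definition good (ss : seq bool) := (count id ss + 2 * count negb ss) %% 3 == 0.

Lemma foldl_val x ss :
  val (foldl step x ss) = (x + count id ss + 2 * count negb ss) %% 3.
Proof.
elim: ss x => [|b ss IH] x /=; first by rewrite !addn0 modn_small.
rewrite IH step_val; case: b => /=; rewrite -!addnA modnDml; congr (_ %% 3); lia.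
Qed.

Lemma good_foldl x ss : (foldl step x ss == x) = good ss.
Proof.
apply/eqP/idP => [/(congr1 val)|].
  rewrite /= foldl_val /good -addnA => h; apply/eqP; move: (ltn_ord x) h; rewrite /=; lia.
rewrite /good => /eqP h; apply: val_inj; rewrite /= foldl_val; move: (ltn_ord x) h; lia.
Qed.

Lemma step_neq x b : x != step x b.
Proof. by move: x; f3; case: b. Qed.

Lemma path_scanl x ss : path neq x (scanl step x ss).
Proof. by elim: ss x => //= b ss IH x; rewrite IH andbT; apply: step_neq. Qed.

Lemma last_scanl x ss : last x (scanl step x ss) = foldl step x ss.
Proof. by elim: ss x => //= b ss IH x. Qed.

Lemma scanl_csg x p : path neq x p -> scanl step x (pairmap sgn x p) = p.
Proof.
by elim: p x => //= y p IH x /andP [hxy hp]; rewrite step_sgn // IH.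
Qed.

Lemma size_V x ss : size (V x ss) = size ss.
Proof. by rewrite /V size_belast size_scanl. Qed.

Lemma V_cyc x ss : good ss -> cyc (V x ss).
Proof.
rewrite -(good_foldl x) => /eqP hf.
rewrite /V; case E: (scanl step x ss) => [|y S0] //=.
rewrite /cyc /= -[X in rcons _ X]hf -last_scanl E /=.
by rewrite -lastI -E path_scanl.
Qed.

Lemma csgK s : cyc s -> s = V (head ord0 s) (csg s) /\ good (csg s)
  /\ size (csg s) = size s.
Proof.
case: s => [|x r] //= hc.
have hs := @scanl_csg x _ hc.
rewrite /V hs belast_rcons -(good_foldl x) -last_scanl hs last_rcons eqxx.
by rewrite size_pairmap size_rcons.
Qed.
Set Implicit Arguments. Unset Strict Implicit. Unset Printing Implicit Defensive.

Inductive reach : seq 'I_3 -> seq 'I_3 -> Prop :=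
| reach0 s : reach s s
| reachS s t u : cyc s -> cyc t -> (exists w, t = rcons (behead s) w) ->
    reach t u -> reach s u.

Lemma reach_trans s t u : reach s t -> reach t u -> reach s u.
Proof.
elim=> // s1 t1 u1 h1 h2 h3 _ IH hu; apply: reachS h1 h2 h3 (IH hu).
Qed.

Lemma reach_rot1 s : cyc s -> reach s (rot 1 s).
Proof.
case: s => [|x r] hc; first by apply: reach0.
rewrite rot1_cons; apply: (@reachS _ (rcons r x)) => //.
- by rewrite -rot1_cons /cyc rot_cycle.
- by exists x.
exact: reach0.
Qed.

Lemma reach_rot s k : cyc s -> k <= size s -> reach s (rot k s).
Proof.
move=> hc; elim: k => [|k IH] hk; first by rewrite rot0; apply: reach0.
rewrite (_ : k.+1 = 1 + k) // rotD // ; apply: (reach_trans (IH (ltnW hk))).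
by apply: reach_rot1; rewrite /cyc rot_cycle.
Qed.

Lemma reach_rot_back s k : cyc s -> k <= size s -> reach (rot k s) s.
Proof.
move=> hc hk.
have := @reach_rot (rot k s) (size s - k); rewrite /cyc rot_cycle size_rot.
rewrite -rotD ?subnK ?rot_size //; apply => //; exact: leq_subr.
Qed.

Lemma recolor Pre c c' Post : cyc (Pre ++ c :: Post) -> cyc (Pre ++ c' :: Post) ->
  reach (Pre ++ c :: Post) (Pre ++ c' :: Post).
Proof.
move=> h1 h2.
apply: (reach_trans (@reach_rot _ (size Pre) h1 _)); first by rewrite size_cat leq_addr.
rewrite rot_size_cat.
have -> : Pre ++ c' :: Post = (rcons Pre c') ++ Post by rewrite cat_rcons.
have E : rcons (Post ++ Pre) c' = rot (size (rcons Pre c')) (rcons Pre c' ++ Post).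
  by rewrite rot_size_cat rcons_cat.
have h2' : cyc (rcons Pre c' ++ Post) by rewrite cat_rcons.
apply: (reachS (t := rcons (Post ++ Pre) c')).
- by rewrite /cyc -(rot_cycle (size Pre)) rot_size_cat in h1.
- by rewrite E /cyc rot_cycle.
- by exists c'.
rewrite E; apply: reach_rot_back => //; rewrite size_cat leq_addr //.
Qed.
Set Implicit Arguments. Unset Strict Implicit. Unset Printing Implicit Defensive.

Definition R2 s t := reach s t /\ reach t s.
Definition R x s1 s2 := R2 (V x s1) (V x s2).

Lemma R2_trans s t u : R2 s t -> R2 t u -> R2 s u.
Proof. by case=> h1 h2 [h3 h4]; split; apply: reach_trans; eassumption. Qed.
Lemma R2_sym s t : R2 s t -> R2 t s.
Proof. by case. Qed.
Lemma R2_refl s : R2 s s.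
Proof. by split; apply: reach0. Qed.

Lemma belastL (x c q : 'I_3) P Q :
  belast x (P ++ c :: q :: Q) = (x :: P) ++ c :: belast q Q.
Proof. by elim: P x => //= p P IH x; rewrite IH. Qed.

Lemma good_eq s t : count id s = count id t -> count negb s = count negb t ->
  good s = good t.
Proof. by move=> h1 h2; rewrite /good h1 h2. Qed.

Lemma swap_count (p : pred bool) A a b B :
  count p (A ++ a :: b :: B) = count p (A ++ b :: a :: B).
Proof. by rewrite !count_cat /=; congr (_ + _); rewrite !addnA (addnC (p a)). Qed.

Lemma good_swap A a b B : good (A ++ a :: b :: B) = good (A ++ b :: a :: B).
Proof. by apply: good_eq; apply: swap_count. Qed.

Lemma swap_reach x A a b B : good (A ++ a :: b :: B) ->
  reach (V x (A ++ a :: b :: B)) (V x (A ++ b :: a :: B)).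
Proof.
case: (eqVneq a b) => [->|hab g]; first by move=> _; apply: reach0.
have g' : good (A ++ b :: a :: B) by rewrite -good_swap.
have := @V_cyc x _ g; have := @V_cyc x _ g'.
rewrite /V !scanl_cat /= (stepK2 _ _ _ hab) (stepK2 _ b a) 1?eq_sym // !belastL.
by move=> h2 h1; apply: recolor.
Qed.

Lemma swapR x A a b B : good (A ++ a :: b :: B) ->
  R x (A ++ a :: b :: B) (A ++ b :: a :: B).
Proof.
move=> g; split; first exact: swap_reach.
by apply: swap_reach; rewrite -good_swap.
Qed.

Lemma bubble x p A C : good (A ++ false :: nseq p true ++ C) ->
  R x (A ++ false :: nseq p true ++ C) (A ++ nseq p true ++ false :: C).
Proof.
elim: p A => [|p IH] A g; first exact: R2_refl.
have := swapR x g; rewrite /= => h; apply: (R2_trans h).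
rewrite -cat_rcons -[A ++ true :: _]cat_rcons; apply: IH.
by rewrite cat_rcons -good_swap.
Qed.

Definition srt (ss : seq bool) := nseq (count id ss) true ++ nseq (count negb ss) false.

Lemma count_srt_id ss : count id (srt ss) = count id ss.
Proof. by rewrite count_cat !count_nseq /= mul1n mul0n addn0. Qed.
Lemma count_srt_negb ss : count negb (srt ss) = count negb ss.
Proof. by rewrite count_cat !count_nseq /= mul1n mul0n. Qed.

Lemma sortR x ss A : good (A ++ ss) -> R x (A ++ ss) (A ++ srt ss).
Proof.
elim: ss A => [|b ss IH] A g; first exact: R2_refl.
have := IH (rcons A b); rewrite !cat_rcons => /(_ g) h; apply: (R2_trans h).
case: b g h => g h; first exact: R2_refl.
rewrite /srt /=; apply: bubble.
apply: etrans g; apply: good_eq; rewrite !count_cat /= ?count_srt_id ?count_srt_negb //.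
Qed.

Lemma permR x s1 s2 : good s1 -> count id s1 = count id s2 ->
  count negb s1 = count negb s2 -> R x s1 s2.
Proof.
move=> g h1 h2.
have g2 : good s2 by rewrite -(good_eq h1 h2).
have := sortR x (A := [::]) g; have := sortR x (A := [::]) g2.
rewrite /= /srt h1 h2 => hA hB; apply: (R2_trans hB); exact: R2_sym.
Qed.
Set Implicit Arguments. Unset Strict Implicit. Unset Printing Implicit Defensive.

Lemma rotV x b ss : good (b :: ss) ->
  rot 1 (V x (b :: ss)) = V (step x b) (rcons ss b).
Proof.
rewrite -(good_foldl x) /= => /eqP hf.
rewrite /V /= rot1_cons scanl_rcons foldl_rcons hf belast_rcons.
by rewrite -[X in rcons _ X]hf -last_scanl -lastI.
Qed.

Lemma shift x b ss : good (b :: ss) -> R2 (V x (b :: ss)) (V (step x b) (b :: ss)).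
Proof.
move=> g.
have hc := @V_cyc x _ g.
have hr : R2 (V x (b :: ss)) (rot 1 (V x (b :: ss))).
  by split; [apply: reach_rot | apply: reach_rot_back]; rewrite // size_V.
apply: (R2_trans hr); rewrite rotV //.
apply: permR.
- by apply: etrans g; apply: good_eq; rewrite -cats1 count_cat /= addn0 addnC.
- by rewrite -cats1 count_cat /= addn0 addnC.
- by rewrite -cats1 count_cat /= addn0 addnC.
Qed.

Lemma letter_any x y ss : good ss -> 0 < size ss -> R2 (V x ss) (V y ss).
Proof.
case: ss => [|b ss] // g _.
have h1 := shift x g; have h2 := shift (step x b) g.
case/or3P: (step3 x y b) => /eqP ->.
- exact: R2_refl.
- exact: h1.
- exact: R2_trans h1 h2.
Qed.

Lemma back_seq u v : cyc u -> cyc v -> 2 <= size u -> size u = size v ->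
  count id (csg u) = count id (csg v) -> count negb (csg u) = count negb (csg v) ->
  reach u v.
Proof.
move=> hu hv hs hsz h1 h2.
have [eu [gu su]] := @csgK _ hu; have [ev [gv sv]] := @csgK _ hv.
rewrite eu ev.
have [hA _] := permR (head ord0 u) gu h1 h2.
apply: (reach_trans hA).
have hp : 0 < size (csg v) by rewrite sv -hsz; exact: ltnW.
by have [hB _] := @letter_any (head ord0 u) (head ord0 v) (csg v) gv hp.
Qed.
Set Implicit Arguments. Unset Strict Implicit. Unset Printing Implicit Defensive.

Lemma nth_cyc1 (x : 'I_3) r i : i < size r -> 
  nth ord0 (rcons r x) i = nth ord0 (x :: r) i.+1.
Proof. by move=> h; rewrite nth_rcons h. Qed.

Lemma ckv l (a : l.-tuple 'I_3) : 2 <= l -> ck_vertex a = cyc a.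
Proof.
move=> hl; rewrite /ck_vertex /cyc.
case: a => s /= /eqP hs.
case: s hs => [|x r] hs; first by rewrite -hs in hl.
rewrite /= -hs /=; apply/idP/idP.
- case/andP => /forallP hf hlast; apply/(pathP ord0) => i.
  rewrite size_rcons ltnS => hi.
  rewrite -rcons_cons nth_rcons /= ltnS hi nth_rcons.
  case: ltngtP hi => // [hi1 _ | -> _].
    have := hf (Ordinal (ltnW (hi1 : i < size r) : i < (size r).+1)); rewrite /= ltnS hi1 /=.
    by apply.
  by rewrite /neq /= eq_sym.
- move/(pathP ord0) => hp; apply/andP; split.
    apply/forallP => -[i hi] /=; apply/implyP; rewrite ltnS => hi1.
    have := hp i; rewrite size_rcons ltnS (ltnW hi1) -rcons_cons nth_rcons /= hi.
    by rewrite nth_cyc1 //; apply.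
  have := hp (size r); rewrite size_rcons ltnSn -rcons_cons nth_rcons /= ltnSn.
  by rewrite nth_rcons ltnn eqxx eq_sym; apply.
Qed.

Lemma arc_exists l (a b : l.-tuple 'I_3) : 2 <= l ->
  ck_arc a b -> exists w, val b = rcons (behead a) w.
Proof.
move=> hl /and3P [_ _ /forallP hf].
exists (nth ord0 b l.-1); apply: (@eq_from_nth _ ord0).
  by rewrite size_rcons size_behead !size_tuple; lia.
move=> i; rewrite size_tuple => hi.
rewrite nth_rcons size_behead size_tuple.
case: (ltngtP i l.-1) => [h1|h1|->] //; last by lia.
have := hf (Ordinal hi); rewrite /= (_ : i.+1 < l) ?nth_behead; last by lia.
by move=> /eqP.
Qed.

Lemma arc_of l (a b : l.-tuple 'I_3) : 2 <= l -> cyc a -> cyc b ->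
  (exists w, val b = rcons (behead a) w) -> ck_arc a b.
Proof.
move=> hl ha hb [w hw]; rewrite /ck_arc !ckv // ha hb /=.
apply/forallP => -[i hi] /=; apply/implyP => hi1.
rewrite hw nth_rcons size_behead size_tuple (_ : i < l.-1) ?nth_behead //; lia.
Qed.

Lemma reach_connect l (hl : 2 <= l) s t : reach s t ->
  forall u v : l.-tuple 'I_3, val u = s -> val v = t -> connect (@ck_arc l) u v.
Proof.
elim => [s0|s0 t0 u0 hs ht [w hw] _ IH] u v hu hv.
  have -> : u = v by apply: val_inj; rewrite /= hu hv.
  exact: connect0.
have hsz : size t0 == l by rewrite hw size_rcons size_behead -hu size_tuple; lia.
apply: (connect_trans (y := Tuple hsz)); last exact: IH.
have hu' : tval u = s0 := hu.
apply: connect1; apply: arc_of => //=; rewrite ?hu' //.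
by exists w.
Qed.

Lemma imprint_csg l (a : l.-tuple 'I_3) : 1 <= l -> imprint a = csg a.
Proof.
move=> hl; rewrite /imprint; case: a => s /= /eqP hs.
case: s hs => [|x r] hs; first by rewrite -hs in hl.
subst l.
apply: (@eq_from_nth _ false).
  by rewrite size_map size_iota size_pairmap size_rcons.
move=> i; rewrite size_map size_iota => hi.
rewrite (nth_map 0) ?size_iota // nth_iota // add0n (nth_pairmap ord0) ?size_rcons //.
rewrite -rcons_cons nth_rcons hi.
rewrite /= in hi.
case: (ltngtP i.+1 (size r).+1) => [h1|h1|h1].
- by rewrite /= modn_small // nth_rcons -ltnS h1.
- by exfalso; move: hi h1; rewrite ltnS; lia.
- by case: h1 => h1; rewrite /= h1 modnn nth_rcons ltnn eqxx.
Qed.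

Lemma pairmap_rcons (f : 'I_3 -> 'I_3 -> bool) a s b :
  pairmap f a (rcons s b) = rcons (pairmap f a s) (f (last a s) b).
Proof. by elim: s a => //= c s IH a; rewrite IH. Qed.

Lemma arc_count l (a b : l.-tuple 'I_3) : 2 <= l -> ck_arc a b ->
  count id (csg b) = count id (csg a).
Proof.
move=> hl hab; have [w hw] := arc_exists hl hab.
move: hab => /and3P [ha hb _]; rewrite !ckv // in ha hb.
rewrite hw; rewrite hw in hb; move: ha hb; clear hw.
case: a => s /= /eqP hs.
case: s hs => [|y [|z r1]] hs; try by rewrite -hs in hl.
rewrite /cyc /= => ha hb.
rewrite !pairmap_rcons last_rcons !rcons_path last_rcons in ha hb *.
rewrite -!cats1 !count_cat /=.
move: ha hb => /and3P [hyz _ hxy] /andP [/andP [_ hxw] hwz].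
have := @sgn4 (last z r1) y z w.
rewrite /neq in hyz hxy hxw hwz.
move=> /(_ hxy hyz hxw hwz); lia.
Qed.
Set Implicit Arguments. Unset Strict Implicit. Unset Printing Implicit Defensive.

Lemma nminusE (s : seq bool) : nminus s = size s - nplus s.
Proof.
rewrite /nminus /nplus -(count_predC id s) addKn; by apply: eq_count.
Qed.

Lemma size_imprint l (a : l.-tuple 'I_3) : size (imprint a) = l.
Proof. by rewrite size_map size_iota. Qed.

Lemma inv l (a b : l.-tuple 'I_3) : 2 <= l -> ck_arc a b ->
  nplus (imprint b) = nplus (imprint a) /\ nminus (imprint b) = nminus (imprint a).
Proof.
move=> hl hab.
have e : nplus (imprint b) = nplus (imprint a).
  by rewrite /nplus !imprint_csg ?(ltnW hl) // (arc_count hl hab).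
by split => //; rewrite !nminusE !size_imprint e.
Qed.

Theorem lemma5 (l : nat) (hl : 2 <= l) (u v : l.-tuple 'I_3) :
  ck_vertex u -> ck_vertex v ->
  (connect (@ck_arc l) u v <->
   (nplus (imprint v) = nplus (imprint u) /\ nminus (imprint v) = nminus (imprint u))).
Proof.
move=> hu hv; split.
- move/connectP => [p hp ->]; elim: p u hu hp => [|b p IH] u hu /=; first by [].
  case/andP => hub hp.
  have hb : ck_vertex b by case/and3P: hub.
  have [e1 e2] := inv hl hub.
  have [e3 e4] := IH b hb hp.
  by rewrite e3 e4 e1 e2.
- move=> [h1 h2].
  rewrite /nplus /nminus !imprint_csg ?(ltnW hl) // in h1 h2.
  have hu' := hu; have hv' := hv; rewrite ckv // in hu'; rewrite ckv // in hv'.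
  apply: (reach_connect hl (s := val u) (t := val v)) => //.
  apply: back_seq => //; rewrite ?size_tuple //.
Qed.
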